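(* Let $\mathbf A$ and $\mathbf B$ be independent $d\times d$ random matrices that are both determinant preserving. Then (1) $\mathbf A+\mathbf B$ is determinant preserving, and (2) $\mathbf A\mathbf B$ is determinant preserving.
   Context: A random $d\times d$ matrix $\mathbf A$ is called determinant preserving (d.p.) if $\mathbb E[\det(\mathbf A_{\mathcal I,\mathcal J})]=\det(\mathbb E[\mathbf A_{\mathcal I,\mathcal J}])$ for all $\mathcal I,\mathcal J\subseteq\{1,\dots,d\}$ with $|\mathcal I|=|\mathcal J|$, where $\mathbf A_{\mathcal I,\mathcal J}$ is the submatrix with rows indexed by $\mathcal I$ and columns by $\mathcal J$ (all expectations assumed finite). *)

(* Defs.v *)
From mathcomp Require Import all_boot all_order all_algebra.
From mathcomp Require Import all_classical all_reals all_analysis.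
Set Implicit Arguments. Unset Strict Implicit. Unset Printing Implicit Defensive.
Import GRing.Theory Num.Theory.
Local Open Scope classical_set_scope.
Local Open Scope ring_scope.

Section RandomMatrices.
Context {dT : measure_display} {T : measurableType dT} {R : realType}.

Definition random_matrix (d : nat) (A : T -> 'M[R]_d) :=
  forall i j, measurable_fun setT (fun w => A w i j).

(* Real-valued expectation (only used for integrable functions). *)
Definition expect (P : probability T R) (f : T -> R) : R := Rintegral P setT f.

(* Strictly increasing index map: encodes an index subset of size k,
   listed in increasing order. *)
Definition incr_idx (k d : nat) (f : 'I_k -> 'I_d) :=
  forall i j : 'I_k, (i < j)%N -> (f i < f j)%N.

(* The submatrix M_{I,J} with I = image f, J = image g. *)
Definition subm (d k : nat) (f g : 'I_k -> 'I_d) (M : 'M[R]_d) : 'M[R]_k :=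
  \matrix_(i < k, j < k) M (f i) (g j).

Definition mean_matrix (P : probability T R) (d : nat) (A : T -> 'M[R]_d)
  : 'M[R]_d := \matrix_(i, j) expect P (fun w => A w i j).

Definition det_preserving (P : probability T R) (d : nat) (A : T -> 'M[R]_d) :=
  forall (k : nat) (f g : 'I_k -> 'I_d), incr_idx f -> incr_idx g ->
    P.-integrable setT (fun w => (\det (subm f g (A w)))%:E) /\
    expect P (fun w => \det (subm f g (A w)))
      = \det (subm f g (mean_matrix P A)).

(* Independence of two random matrices: the joint law of the entries of A and
   of B factorizes on measurable rectangles (a pi-system generating the
   product sigma-algebra). *)
Definition indep_matrices (P : probability T R) (d : nat) (A B : T -> 'M[R]_d) :=
  forall S U : 'I_d -> 'I_d -> set R,
    (forall i j, measurable (S i j)) -> (forall i j, measurable (U i j)) ->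
    P ([set w | forall i j, S i j (A w i j)] `&` [set w | forall i j, U i j (B w i j)])
    = (P [set w | forall i j, S i j (A w i j)] * P [set w | forall i j, U i j (B w i j)])%E.

End RandomMatrices.

(* Main.v *)
From HB Require Import structures.
Require Import Defs.
From mathcomp Require Import all_boot all_order all_algebra all_fingroup.
From mathcomp Require Import all_classical all_reals all_analysis.
From mathcomp Require Import measurable_realfun.
Set Implicit Arguments. Unset Strict Implicit. Unset Printing Implicit Defensive.
Import GRing.Theory Num.Theory.
Local Open Scope ring_scope.

Lemma sort_inj k d (f : 'I_k -> 'I_d) : injective f ->
  exists (f0 : 'I_k -> 'I_d) (s : 'S_k), incr_idx f0 /\ forall i, f i = f0 (s i).
Proof.
move=> injf.
pose rk i := #|[set l | (f l < f i)%N]|.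
have rk_lt i : (rk i < k)%N.
  rewrite -[k in (_ < k)%N]card_ord -cardsT; apply: proper_card.
  rewrite properE finset.subsetT /=; apply/fintype.subsetPn; exists i => //.
  by rewrite inE ltnn.
have rk_mono i j : (f i < f j)%N -> (rk i < rk j)%N.
  move=> lij; apply: proper_card; rewrite properE; apply/andP; split.
    by apply/fintype.subsetP => l; rewrite !inE => /ltn_trans; apply.
  by apply/fintype.subsetPn; exists i; rewrite !inE ?ltnn.
pose sf i := Ordinal (rk_lt i).
have sinj : injective sf.
  move=> i j /(congr1 val) /= eij; apply: injf; apply/val_inj => /=.
  case: (ltngtP (f i) (f j)) => // /rk_mono; by rewrite eij ltnn.
pose s := perm sinj.
exists (fun a => f ((s^-1)%g a)), s; split.
  move=> a b ab.
  case: (ltngtP (f ((s^-1)%g a)) (f ((s^-1)%g b))) => // [/rk_mono|].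
    have: (val (s ((s^-1)%g b)) < val (s ((s^-1)%g a)))%N -> False.
      by rewrite !permKV => /(ltn_trans ab); rewrite ltnn.
    by rewrite !permE.
  move/val_inj/injf/(congr1 s); rewrite !permKV => eab.
  by move: ab; rewrite eab ltnn.
by move=> i; rewrite permK.
Qed.

Section Alg2.
Variable R : numFieldType.
Definition msub m n k (f : 'I_k -> 'I_m) (g : 'I_k -> 'I_n) (M : 'M[R]_(m,n)) : 'M[R]_k :=
  \matrix_(i, j) M (f i) (g j).

Lemma msub_sort k d (f g : 'I_k -> 'I_d) :
  (forall M, \det (msub f g M) = 0) \/
  exists (c : R) (f0 g0 : 'I_k -> 'I_d), [/\ incr_idx f0, incr_idx g0 &
     forall M, \det (msub f g M) = c * \det (msub f0 g0 M)].
Proof.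
case: (boolP (injectiveb f)) => [/injectiveP injf|/injectivePn [i1 [i2 ne12 e12]]]; last first.
  left=> M; apply: (determinant_alternate ne12) => j; by rewrite !mxE e12.
case: (boolP (injectiveb g)) => [/injectiveP injg|/injectivePn [i1 [i2 ne12 e12]]]; last first.
  left=> M; rewrite -det_tr; apply: (determinant_alternate ne12) => j; by rewrite !mxE e12.
right; have [f0 [s [if0 ef]]] := sort_inj injf.
have [g0 [t [ig0 eg]]] := sort_inj injg.
exists ((-1) ^+ s * (-1) ^+ t), f0, g0; split => // M.
have -> : msub f g M = row_perm s (col_perm t (msub f0 g0 M)).
  by apply/matrixP => i j; rewrite /row_perm /col_perm !mxE ef eg.
rewrite row_permE col_permE !det_mulmx !det_perm odd_permV. by rewrite -mulrA [\det _ * _]mulrC.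
Qed.
End Alg2.
Section Alg3.
Variable R : numFieldType.
Lemma det_msub_col k m p (N : 'M[R]_(m,p)) (f : 'I_k.+1 -> 'I_m) (g : 'I_k.+1 -> 'I_p) j :
  \det (msub f g N) = \sum_i N (f i) (g j) * (-1) ^+ (i + j) *
       \det (msub (fun a => f (lift i a)) (fun b => g (lift j b)) N).
Proof.
rewrite (expand_det_col _ j); apply: eq_bigr => i _.
rewrite /cofactor mxE mulrA; congr (_ * \det _).
by apply/matrixP => a b; rewrite !mxE.
Qed.

Lemma msub_tr m n k (f : 'I_k -> 'I_n) (g : 'I_k -> 'I_m) (M : 'M[R]_(m,n)) :
  msub f g M^T = (msub g f M)^T.
Proof. by apply/matrixP => i j; rewrite !mxE. Qed.

Lemma det_mx11' (M : 'M[R]_1) : \det M = M 0 0.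
Proof. exact: det_mx11. Qed.
End Alg3.
Section Alg.
Variable R : numFieldType.

Lemma det_mulmx_expand k m (X : 'M[R]_(k,m)) (Y : 'M[R]_(m,k)) :
  \det (X *m Y) = \sum_(h : {ffun 'I_k -> 'I_m})
     (\prod_i X i (h i)) * \det (\matrix_(i,j) Y (h i) j).
Proof.
rewrite /(\det _).
transitivity (\sum_(s : 'S_k) \sum_(h : {ffun 'I_k -> 'I_m})
   (-1) ^+ s * \prod_i (X i (h i) * Y (h i) (s i))).
  apply: eq_bigr => s _; rewrite -big_distrr /=; congr (_ * _).
  rewrite -(bigA_distr_bigA (fun i l => X i l * Y l (s i))) /=.
  by apply: eq_bigr => i _; rewrite mxE.
rewrite exchange_big /=; apply: eq_bigr => h _.
rewrite big_distrr /=; apply: eq_bigr => s _.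
rewrite big_split /= mulrCA; congr (_ * (_ * _)).
by apply: eq_bigr => i _; rewrite mxE.
Qed.

Lemma det_mulmx_sym k m (X : 'M[R]_(k,m)) (Y : 'M[R]_(m,k)) :
  k`!%:R * \det (X *m Y) = \sum_(h : {ffun 'I_k -> 'I_m})
     \det (\matrix_(i,j) X i (h j)) * \det (\matrix_(i,j) Y (h i) j).
Proof.
transitivity (\sum_(s : 'S_k) \sum_(h : {ffun 'I_k -> 'I_m})
   (-1) ^+ s * (\prod_i X i (h (s i))) * \det (\matrix_(i,j) Y (h i) j)); last first.
  rewrite exchange_big /=; apply: eq_bigr => h _.
  rewrite /(\det (\matrix_(i, j) X i (h j))) big_distrl /=.
  apply: eq_bigr => s _; congr (_ * _ * _).
  by apply: eq_bigr => i _; rewrite mxE.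
rewrite mulr_natl -card_Sn -sumr_const.
apply: eq_bigr => s _.
pose sh (h : {ffun 'I_k -> 'I_m}) : {ffun 'I_k -> 'I_m} := [ffun i => h (s i)].
rewrite det_mulmx_expand (reindex sh) /=; last first.
  exists (fun h : {ffun 'I_k -> 'I_m} => [ffun i => h ((s^-1)%g i)]) => h _.
    by apply/ffunP => i; rewrite !ffunE permKV.
  by apply/ffunP => i; rewrite !ffunE permK.
apply: eq_bigr => h _.
have -> : \matrix_(i, j) Y (sh h i) j = row_perm s (\matrix_(i, j) Y (h i) j).
  by apply/matrixP => i j; rewrite /row_perm !mxE /sh ffunE.
rewrite row_permE det_mulmx det_perm.
have -> : \prod_i X i (sh h i) = \prod_i X i (h (s i)).
  by apply: eq_bigr => i _; rewrite /sh ffunE.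
by rewrite mulrCA mulrA.
Qed.
End Alg.

Section Alg4.
Variable R : numFieldType.
Lemma det_msub_mul k m n p (f : 'I_k -> 'I_m) (g : 'I_k -> 'I_p)
   (M : 'M[R]_(m,n)) (N : 'M[R]_(n,p)) :
  \det (msub f g (M *m N)) = (k`!%:R)^-1 *
     \sum_(h : {ffun 'I_k -> 'I_n}) \det (msub f h M) * \det (msub h g N).
Proof.
have -> : msub f g (M *m N) = (\matrix_(i, j) M (f i) j) *m (\matrix_(i, j) N i (g j)).
  by apply/matrixP => i j; rewrite !mxE; apply: eq_bigr => l _; rewrite !mxE.
apply: (@mulfI _ (k`!%:R)); first by rewrite pnatr_eq0 -lt0n fact_gt0.
rewrite mulrA mulfV ?mul1r; last by rewrite pnatr_eq0 -lt0n fact_gt0.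
rewrite det_mulmx_sym; apply: eq_bigr => h _; congr (_ * _); congr (\det _);
  by apply/matrixP => i j; rewrite !mxE.
Qed.
End Alg4.

Local Open Scope classical_set_scope.

Section Good.
Context {dT : measure_display} {T : measurableType dT} {R : realType}.
Variable P : probability T R.

Definition good (f : T -> R) (c : R) :=
  P.-integrable setT (EFin \o f) /\ expect P f = c.

Lemma good_cst c : good (fun _ => c) c.
Proof.
split; first exact: finite_measure_integrable_cst.
have H1 : fine ((P : measure T R) [set: T]) = 1 := congr1 fine (probability_setT P).
by rewrite /expect Rintegral_cst // H1 mulr1.
Qed.

Lemma good_ext f g c : (forall w, f w = g w) -> good f c -> good g c.
Proof.
by move=> fg; have -> : f = g by apply/funext. 
Qed.

Lemma good_add f g a b : good f a -> good g b -> good (fun w => f w + g w) (a + b).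
Proof.
move=> [If Ef] [Ig Eg]; split.
  by have := integrableD measurableT If Ig.
by rewrite /expect RintegralD // -Ef -Eg.
Qed.

Lemma good_scale f a c : good f a -> good (fun w => c * f w) (c * a).
Proof.
move=> [If Ef]; split.
  by have := integrableZl measurableT c If.
by rewrite /expect RintegralZl // -Ef.
Qed.

Lemma good_sum (I : Type) (r : seq I) (Q : pred I) (F : I -> T -> R) (c : I -> R) :
  (forall i, Q i -> good (F i) (c i)) ->
  good (fun w => \sum_(i <- r | Q i) F i w) (\sum_(i <- r | Q i) c i).
Proof.
move=> H; elim: r => [|x r IH].
  by rewrite big_nil; apply: good_ext (good_cst 0) => w; rewrite big_nil.
rewrite big_cons; case: ifP => Qx.
  by apply: good_ext (good_add (H _ Qx) IH) => w; rewrite big_cons Qx.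
by apply: good_ext IH => w; rewrite big_cons Qx.
Qed.

End Good.

Section GDP.
Context {dT : measure_display} {T : measurableType dT} {R : realType}.
Variable P : probability T R.

Definition emx m n (X : T -> 'M[R]_(m,n)) : 'M[R]_(m,n) :=
  \matrix_(i, j) expect P (fun w => X w i j).

Definition gdp m n (X : T -> 'M[R]_(m,n)) :=
  forall k (f : 'I_k -> 'I_m) (g : 'I_k -> 'I_n),
    good P (fun w => \det (msub f g (X w))) (\det (msub f g (emx X))).

Lemma gdp_entry m n (X : T -> 'M[R]_(m,n)) : gdp X ->
  forall i j, good P (fun w => X w i j) (emx X i j).
Proof.
move=> H i j; have := H 1%N (fun=> i) (fun=> j).
rewrite det_mx11 mxE; apply: good_ext => w.
by rewrite det_mx11 mxE.
Qed.

Lemma gdp_tr m n (X : T -> 'M[R]_(m,n)) : gdp X -> gdp (fun w => (X w)^T).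
Proof.
move=> H k f g.
have -> : emx (fun w => (X w)^T) = (emx X)^T.
  by apply/matrixP => i j; rewrite !mxE; apply: eq_Rintegral => w _; rewrite mxE.
rewrite msub_tr det_tr; apply: good_ext (H k g f) => w.
by rewrite msub_tr det_tr.
Qed.

Lemma gdp_cols m n p (X : T -> 'M[R]_(m,n)) (Z : T -> 'M[R]_(m,p))
    (isc : 'I_p -> bool) (phi : 'I_p -> 'I_n) (K : 'M[R]_(m,p)) :
  (forall w i c, Z w i c = if isc c then K i c else X w i (phi c)) ->
  gdp X -> gdp Z.
Proof.
move=> EZ HX.
have EZm i c : emx Z i c = if isc c then K i c else emx X i (phi c).
  rewrite !mxE; case: ifP => ic.
    by have [_ <-] := good_cst P (K i c); apply: eq_Rintegral => w _; rewrite EZ ic.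
  apply: eq_Rintegral => w _; by rewrite EZ ic.
move=> k; elim: k => [|k IH] f g.
  rewrite det_mx00; apply: good_ext (good_cst P 1) => w; by rewrite det_mx00.
case: (pickP (fun j => isc (g j))) => [j gj|nc].
  rewrite (det_msub_col _ _ _ j).
  apply: good_ext; last first.
    apply: good_sum => i _; apply: good_scale; exact: IH.
  move=> w /=; rewrite (det_msub_col _ _ _ j); apply: eq_bigr => i _.
  by rewrite EZm EZ gj.
have nc' b : isc (g b) = false by exact: nc b.
have -> : msub f g (emx Z) = msub f (fun j => phi (g j)) (emx X).
  by apply/matrixP => a b; rewrite [LHS]mxE [RHS]mxE EZm nc'.
apply: good_ext (HX _ _ _) => w; congr (\det _).
by apply/matrixP => a b; rewrite !mxE EZ nc'.
Qed.

Lemma gdp_mul m n p (X : T -> 'M[R]_(m,n)) (Y : T -> 'M[R]_(n,p)) :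
  gdp X -> gdp Y ->
  (forall k (f : 'I_k -> 'I_m) (h : 'I_k -> 'I_n) (g : 'I_k -> 'I_p),
     good P (fun w => \det (msub f h (X w)) * \det (msub h g (Y w)))
       (expect P (fun w => \det (msub f h (X w))) *
        expect P (fun w => \det (msub h g (Y w))))) ->
  gdp (fun w => X w *m Y w).
Proof.
move=> HX HY IND.
have main k (f : 'I_k -> 'I_m) (g : 'I_k -> 'I_p) :
    good P (fun w => \det (msub f g (X w *m Y w))) (\det (msub f g (emx X *m emx Y))).
  rewrite det_msub_mul; apply: good_ext; last first.
    apply: good_scale; apply: good_sum => h _.
    have [_ e1] := HX k f h; have [_ e2] := HY k h g.
    by rewrite -e1 -e2; exact: IND.
  by move=> w /=; rewrite det_msub_mul.
have E : emx (fun w => X w *m Y w) = emx X *m emx Y.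
  apply/matrixP => i j; have [_ e] := main 1%N (fun=> i) (fun=> j).
  rewrite det_mx11 mxE in e; rewrite -e mxE; apply: eq_Rintegral => w _; by rewrite det_mx11 !mxE.
by move=> k f g; rewrite E; exact: main.
Qed.

End GDP.

Section ProdRule.
Context {R : realType}.
Lemma prod_rule (m1 m2 : {sigma_finite_measure set R -> \bar R}) :
  m1.-integrable setT EFin -> m2.-integrable setT EFin ->
  (m1 \x m2)%E.-integrable setT (fun z : R * R => (z.1 * z.2)%:E) /\
  (\int[m1 \x m2]_z (z.1 * z.2)%:E = \int[m1]_x x%:E * \int[m2]_y y%:E)%E.
Proof.
move=> i1 i2.
have mf : measurable_fun setT (fun z : R * R => (z.1 * z.2)%:E).
  apply/measurable_EFinP; apply: measurable_realfun.measurable_funM.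
    exact: measurable_fst.
  exact: measurable_snd.
have [_ f1] := integrableP _ _ _ i1.
have [_ f2] := integrableP _ _ _ i2.
have imf : (m1 \x m2)%E.-integrable setT (fun z : R * R => (z.1 * z.2)%:E).
  apply/integrableP; split => //.
  rewrite (fubini_tonelli1 (fun z : R * R => (`|(z.1 * z.2)%:E|)%E)); last 2 first.
    exact: measurableT_comp.
    by move=> z.
  rewrite /fubini_F /=.
  under eq_integral => x _.
    under eq_integral => y _ do rewrite normrM EFinM.
    rewrite ge0_integralZl //; last first.
      by apply: measurableT_comp => //; exact: measurable_EFinP.
    over.
  rewrite /= ge0_integralZr //; last 2 first.
    by apply: measurableT_comp => //; exact: measurable_EFinP.
    exact: integral_ge0.
  apply: lte_mul_pinfty; first exact: integral_ge0.
    by rewrite ge0_fin_numE; [exact: f1|exact: integral_ge0].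
  exact: f2.
split => //.
rewrite -integral12_prod_meas1 // /fubini_F /=.
have fin2 : (\int[m2]_y y%:E)%E \is a fin_num by exact: integrable_fin_num.
under eq_integral => x _.
  under eq_integral => y _ do rewrite EFinM.
  rewrite integralZl //.
  over.
rewrite /= -(fineK fin2) integralZr //.
Qed.

End ProdRule.

Section IndepExt.
Context {dT : measure_display} {T : measurableType dT} {R : realType}.
Variable P : probability T R.
Local Open Scope ereal_scope.

Lemma probE (A : set T) : measurable A -> P A = (fine (P A))%:E.
Proof. by move=> mA; rewrite fineK // fin_num_measure. Qed.

Lemma indep_ext (G H : set (set T)) :
  setI_closed G -> G `<=` measurable -> H `<=` measurable ->
  (forall E F, G E -> H F -> P (E `&` F) = P E * P F) ->
  forall E F, <<s G >> E -> H F -> P (E `&` F) = P E * P F.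
Proof.
move=> GI Gm Hm ind E F sE HF.
have sGm : <<s G >> `<=` measurable := smallest_sub (sigma_algebra_measurable T) Gm.
have mF := Hm _ HF.
have P1 : P setT = 1 := probability_setT P.
apply: (@dynkin_induction _ (g_sigma_algebraType G) G
   (fun E => P (E `&` F) = P E * P F)); last exact: sE.
- by [].
- exact: GI.
- change (P ([set: T] `&` F) = P [set: T] * P F).
  by rewrite setTI P1 mul1e.
- by move=> S GS; exact: ind.
- move=> S mS PS.
  change (P (S `&` F) = P S * P F) in PS.
  change (P (~` S `&` F) = P (~` S) * P F).
  have mS' : @measurable _ T S := sGm _ mS.
  have eF : P F = P (~` S `&` F) + P (S `&` F).
    rewrite -measureU; first by rewrite -setIUl setvU setTI.
    + by apply: measurableI => //; exact: measurableC.
    + exact: measurableI.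
    + by rewrite setIACA setICl set0I.
  have eS : P setT = P (~` S) + P S.
    rewrite -measureU; [by rewrite setvU|exact: measurableC|exact: mS'|exact: setICl].
  move: eF eS; rewrite PS P1.
  rewrite (probE mF) (probE mS') (probE (measurableC mS')).
  rewrite (probE (measurableI _ _ (measurableC mS') mF)).
  rewrite -!EFinM -!EFinD => eF0 eS0.
  have eF := EFin_inj eF0; have eS := EFin_inj eS0.
  congr EFin.
  have -> : (fine (P (~` S `&` F)) = fine (P F) - fine (P S) * fine (P F))%R.
    by rewrite {1}eF addrK.
  have -> : (fine (P (~` S)) = 1 - fine (P S))%R by rewrite eS addrK.
  by rewrite mulrBl mul1r.
- move=> Fn mFn tFn PFn.
  change (P (\bigcup_k Fn k `&` F) = P (\bigcup_k Fn k) * P F).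
  have mFn' n : @measurable _ T (Fn n) := sGm _ (mFn n).
  rewrite setI_bigcupl.
  rewrite (measure_bigcup P setT (fun n => Fn n `&` F)); last 2 first.
    by move=> n _; exact: measurableI.
    by apply: trivIset_setIr.
  rewrite (measure_bigcup P setT Fn) //.
  rewrite (probE mF) muleC -nneseriesZl //.
  apply: eq_eseriesr => n _; rewrite -(probE mF) muleC; exact: PFn n.
Qed.

End IndepExt.

Section IndepProd.
Context {dT : measure_display} {T : measurableType dT} {R : realType}.
Variable P : probability T R.

Lemma indep_prod (X Y : T -> R) :
  measurable_fun setT X -> measurable_fun setT Y ->
  (forall S U, measurable S -> measurable U ->
     P (X @^-1` S `&` Y @^-1` U) = (P (X @^-1` S) * P (Y @^-1` U))%E) ->
  P.-integrable setT (EFin \o X) -> P.-integrable setT (EFin \o Y) ->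
  P.-integrable setT (EFin \o (fun w => X w * Y w)) /\
  Rintegral P setT (fun w => X w * Y w) = Rintegral P setT X * Rintegral P setT Y.
Proof.
move=> mX mY ind iX iY.
pose Xp : {mfun T >-> R} := HB.pack X (isMeasurableFun.Build _ _ _ _ _ mX).
pose Yp : {mfun T >-> R} := HB.pack Y (isMeasurableFun.Build _ _ _ _ _ mY).
have mZ : measurable_fun setT (fun w => (X w, Y w)) := measurable_fun_pair mX mY.
pose Zp : {mfun T >-> (R * R)%type} :=
  HB.pack (fun w => (X w, Y w)) (isMeasurableFun.Build _ _ _ _ _ mZ).
pose m1 := distribution P Xp.
pose m2 := distribution P Yp.
pose mu := distribution P Zp.
have rect : forall S U, measurable S -> measurable U -> mu (S `*` U) = (m1 S * m2 U)%E.
  by move=> S U mS mU; exact: ind.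
have Hpm := @product_measure_unique _ _ _ _ _ m1 m2 mu rect.
have i1 : m1.-integrable setT EFin.
  exact: (@integrable_pushforward _ _ T R R X mX P setT EFin (@EFin_measurable R setT) iX measurableT).
have i2 : m2.-integrable setT EFin.
  exact: (@integrable_pushforward _ _ T R R Y mY P setT EFin (@EFin_measurable R setT) iY measurableT).
have [ip ep] := prod_rule i1 i2.
have mf : measurable_fun setT (fun z : R * R => (z.1 * z.2)%:E).
  apply/measurable_EFinP; apply: measurable_realfun.measurable_funM.
    exact: measurable_fst.
  exact: measurable_snd.
have Hpm' : forall A, measurable A -> A `<=` setT -> (m1 \x m2)%E A = mu A.
  by move=> A mA _; exact: Hpm.
have iXY : P.-integrable setT (EFin \o (fun w => X w * Y w)).
  apply/integrableP; split.
    by apply/measurable_EFinP; exact: measurable_realfun.measurable_funM.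
  have e1 : (\int[mu]_(z in setT) `|(z.1 * z.2)%:E| =
             \int[P]_(w in setT) `|(X w * Y w)%:E|)%E.
    rewrite (@ge0_integral_pushforward _ _ T _ R _ mZ P setT
       (fun z : R * R => `|(z.1 * z.2)%:E|)%E) //.
    exact: measurableT_comp.
  rewrite -e1 -(eq_measure_integral mu Hpm').
  by have /integrableP[_] := ip.
split => //.
have E1 : (\int[P]_(w in setT) (X w * Y w)%:E = \int[mu]_(z in setT) (z.1 * z.2)%:E)%E.
  by rewrite (@integral_pushforward _ _ T _ R _ mZ P setT
       (fun z : R * R => (z.1 * z.2)%:E) mf iXY measurableT).
have EX : (\int[m1]_(x in setT) x%:E = \int[P]_(w in setT) (X w)%:E)%E.
  by rewrite (@integral_pushforward _ _ T _ R X mX P setT EFin (@EFin_measurable R setT) iX measurableT).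
have EY : (\int[m2]_(x in setT) x%:E = \int[P]_(w in setT) (Y w)%:E)%E.
  by rewrite (@integral_pushforward _ _ T _ R Y mY P setT EFin (@EFin_measurable R setT) iY measurableT).
rewrite /Rintegral E1 -(eq_measure_integral mu Hpm') ep EX EY fineM //.
  exact: integrable_fin_num iX.
exact: integrable_fin_num iY.
Qed.
End IndepProd.

Section Main.
Context {dT : measure_display} {T : measurableType dT} {R : realType}.
Variable P : probability T R.

Lemma dp_gdp d (A : T -> 'M[R]_d) : det_preserving P A -> gdp P A.
Proof.
move=> H k f g; case: (msub_sort R f g) => [z|[c [f0 [g0 [if0 ig0 e]]]]].
  rewrite z; apply: good_ext (good_cst P 0) => w; by rewrite z.
rewrite e; apply: good_ext; last first.
  apply: good_scale; have [I E] := H k f0 g0 if0 ig0; split; [exact: I|exact: E].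
by move=> w /=; rewrite e.
Qed.

Lemma gdp_dp d (A : T -> 'M[R]_d) : gdp P A -> det_preserving P A.
Proof.
move=> H k f g _ _; have [I E] := H k f g; split; [exact: I|exact: E].
Qed.

Definition rects d (A : T -> 'M[R]_d) : set (set T) :=
  [set E | exists S : 'I_d -> 'I_d -> set R, (forall i j, measurable (S i j)) /\
      E = [set w | forall i j, S i j (A w i j)]].

Lemma ment d (A : T -> 'M[R]_d) i j :
  measurable_fun (setT : set (g_sigma_algebraType (rects A))) (fun w => A w i j).
Proof.
move=> _ U mU; rewrite setTI; apply: sub_sigma_algebra.
exists (fun a b => if (a == i) && (b == j) then U else setT); split.
  by move=> a b; case: ifP.
apply/seteqP; split => w /=.
  by move=> Uw a b; case: ifP => // /andP[/eqP -> /eqP ->].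
by move/(_ i j); rewrite !eqxx.
Qed.

Lemma mdet (G : set (set T)) k (Z : T -> 'M[R]_k) :
  (forall i j, measurable_fun (setT : set (g_sigma_algebraType G)) (fun w => Z w i j)) ->
  measurable_fun (setT : set (g_sigma_algebraType G)) (fun w => \det (Z w)).
Proof.
move=> H; apply: measurable_sum => s.
apply: measurable_realfun.measurable_funM; first exact: measurable_cst.
by apply: measurable_prod => i _; exact: H.
Qed.

Lemma rects_setI d (A : T -> 'M[R]_d) : setI_closed (rects A).
Proof.
move=> _ _ [S [mS ->]] [U [mU ->]].
exists (fun i j => S i j `&` U i j); split.
  by move=> i j; exact: measurableI.
apply/seteqP; split => w /=.
  by move=> [H1 H2] i j; split; [exact: H1|exact: H2].
by move=> H; split => i j; have [] := H i j.
Qed.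

Lemma rects_meas d (A : T -> 'M[R]_d) : random_matrix A -> rects A `<=` measurable.
Proof.
move=> rA _ [S [mS ->]].
have -> : [set w | forall i j, S i j (A w i j)] =
    \bigcap_(p in [set: 'I_d * 'I_d]) ((fun w => A w p.1 p.2) @^-1` S p.1 p.2).
  apply/seteqP; split => w /=.
    by move=> H [i j] _; exact: H.
  by move=> H i j; exact: (H (i, j)).
apply: fin_bigcap_measurable; first exact: finite_finset.
move=> [i j] _ /=; rewrite -[X in measurable X]setTI; exact: rA.
Qed.

Lemma sigma_meas d (A : T -> 'M[R]_d) : random_matrix A ->
  <<s rects A >> `<=` measurable.
Proof. by move=> rA; apply: smallest_sub; [exact: sigma_algebra_measurable|exact: rects_meas]. Qed.

Lemma indep_good d (A B : T -> 'M[R]_d) (X Y : T -> R) :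
  random_matrix A -> random_matrix B -> indep_matrices P A B ->
  measurable_fun (setT : set (g_sigma_algebraType (rects A))) X ->
  measurable_fun (setT : set (g_sigma_algebraType (rects B))) Y ->
  P.-integrable setT (EFin \o X) -> P.-integrable setT (EFin \o Y) ->
  good P (fun w => X w * Y w) (expect P X * expect P Y).
Proof.
move=> rA rB iAB mX mY iX iY.
have sA := sigma_meas rA; have sB := sigma_meas rB.
have ind1 : forall E F, <<s rects A >> E -> rects B F -> P (E `&` F) = (P E * P F)%E.
  apply: indep_ext; [exact: rects_setI|exact: rects_meas|exact: rects_meas|].
  by move=> _ _ [S [mS ->]] [U [mU ->]]; exact: iAB.
have ind2 : forall F E, <<s rects B >> F -> <<s rects A >> E -> P (F `&` E) = (P F * P E)%E.
  apply: indep_ext; [exact: rects_setI|exact: rects_meas|exact: sA|].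
  by move=> F E rF sE; rewrite setIC muleC; exact: ind1.
have pX (S : set R) : measurable S -> <<s rects A >> (X @^-1` S).
  by move=> mS; have := mX measurableT _ mS; rewrite setTI.
have pY (S : set R) : measurable S -> <<s rects B >> (Y @^-1` S).
  by move=> mS; have := mY measurableT _ mS; rewrite setTI.
have mX' : measurable_fun setT X.
  by move=> _ S mS; rewrite setTI; apply: sA; exact: pX.
have mY' : measurable_fun setT Y.
  by move=> _ S mS; rewrite setTI; apply: sB; exact: pY.
have indXY : forall (S U : set R), measurable S -> measurable U ->
    P (X @^-1` S `&` Y @^-1` U) = (P (X @^-1` S) * P (Y @^-1` U))%E.
  move=> S U mS mU; rewrite setIC muleC; apply: ind2; [exact: pY|exact: pX].
have [I E] := indep_prod mX' mY' indXY iX iY.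
by split.
Qed.


Lemma ind_from d (A B : T -> 'M[R]_d) m n p (X : T -> 'M[R]_(m,n)) (Y : T -> 'M[R]_(n,p)) :
  random_matrix A -> random_matrix B -> indep_matrices P A B ->
  (forall i j, measurable_fun (setT : set (g_sigma_algebraType (rects A))) (fun w => X w i j)) ->
  (forall i j, measurable_fun (setT : set (g_sigma_algebraType (rects B))) (fun w => Y w i j)) ->
  gdp P X -> gdp P Y ->
  (forall k (f : 'I_k -> 'I_m) (h : 'I_k -> 'I_n) (g : 'I_k -> 'I_p),
     good P (fun w => \det (msub f h (X w)) * \det (msub h g (Y w)))
       (expect P (fun w => \det (msub f h (X w))) *
        expect P (fun w => \det (msub h g (Y w))))).
Proof.
move=> rA rB iAB mX mY gX gY k f h g.
apply: indep_good rA rB iAB _ _ (gX k f h).1 (gY k h g).1.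
  by apply: mdet => i j; rewrite /msub; under eq_fun do rewrite mxE; exact: mX.
by apply: mdet => i j; rewrite /msub; under eq_fun do rewrite mxE; exact: mY.
Qed.

End Main.

Local Close Scope classical_set_scope.
Unset Implicit Arguments.

Theorem lemma4 (dT : measure_display) (T : measurableType dT) (R : realType)
  (P : probability T R) (d : nat) (A B : T -> 'M[R]_d) :
  random_matrix A -> random_matrix B -> indep_matrices P A B ->
  det_preserving P A -> det_preserving P B ->
  det_preserving P (fun w => A w + B w) /\ det_preserving P (fun w => A w *m B w).
Proof.
move=> rA rB iAB dA dB.
have gA := dp_gdp dA.
have gB := dp_gdp dB.
split; last first.
  apply: gdp_dp; apply: (gdp_mul gA gB).
  by apply: (ind_from rA rB iAB _ _ gA gB) => i j; exact: ment.
pose Xs := fun w => row_mx (A w) (1%:M : 'M[R]_d).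
pose Ys := fun w => col_mx (1%:M : 'M[R]_d) (B w).
have E : (fun w => A w + B w) = (fun w => Xs w *m Ys w).
  by apply/funext => w; rewrite /Xs /Ys mul_row_col mulmx1 mul1mx.
pose isc1 (c : 'I_(d + d)) := if fintype.split c is inr _ then true else false.
pose phi (c : 'I_(d + d)) := match fintype.split c with inl a => a | inr b => b end.
have gX : gdp P Xs.
  apply: (@gdp_cols _ _ _ P _ _ _ A Xs isc1 phi (row_mx 0 1%:M)) => // w i c.
  rewrite /Xs /isc1 /phi /row_mx !mxE; by case: (fintype.split c).
pose isc2 (c : 'I_(d + d)) := if fintype.split c is inl _ then true else false.
have gZ : gdp P (fun w => row_mx (1%:M : 'M[R]_d) (B w)^T).
  apply: (@gdp_cols _ _ _ P _ _ _ (fun w => (B w)^T) _ isc2 phi (row_mx 1%:M 0)).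
    move=> w i c; rewrite /isc2 /phi /row_mx !mxE; case: (fintype.split c) => a /=; by rewrite ?mxE.
  exact: (gdp_tr gB).
have gY : gdp P Ys.
  have -> : Ys = (fun w => (row_mx (1%:M : 'M[R]_d) (B w)^T)^T).
    by apply/funext => w; rewrite /Ys tr_row_mx trmxK trmx1.
  exact: (gdp_tr gZ).
rewrite E; apply: gdp_dp; apply: (gdp_mul gX gY).
apply: (ind_from rA rB iAB _ _ gX gY) => i j.
  rewrite /Xs /row_mx; under eq_fun do rewrite mxE.
  case: (fintype.split j) => a; [exact: ment|exact: measurable_cst].
rewrite /Ys /col_mx; under eq_fun do rewrite mxE.
case: (fintype.split i) => a; [exact: measurable_cst|exact: ment].
Qed.
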